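(* Suppose $\lambda+3\lambda C<1$ and there is a constant $M>0$ such that $a_i\le CM$ for all $i\ge1$. Then for every $k\ge 1$, $$\sum_{m=1}^k E_m^k\le M\,\frac{1-\lambda-2\lambda C}{1-\lambda-3\lambda C}.$$
   Context: Let $C>0$ and $0<\lambda<1$ be constants and let $(a_k)_{k\ge 1}$ be a sequence of nonnegative real numbers. Define the doubly indexed array $(E_m^k)_{m\ge 1,\,k\ge 0}$ by $E_m^0=0$ for all $m\ge1$ and, for $k\ge 1$, $$E_1^k=\lambda\big(E_1^{k-1}+2C\,E_1^{k-1}+a_k\big),\qquad E_m^k=\lambda\big(E_m^{k-1}+C\,(E_m^{k-1}+E_{m-1}^{k-1})\big)\ \ (m\ge 2).$$ (Consequently $E_m^k=0$ whenever $m>k$, and $E_1^1=\lambda a_1$.) In the paper, $C$ is the constant of the evolution requirement of the numerical scheme, $\lambda$ the constant of the mesh $\lambda$-rule, and $E_m^k$ the bound on the $m$-th oscillation extreme after $k$ steps. *)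

(* Defs.v *)
From Stdlib Require Import Reals Lra.
Open Scope R_scope.

(* E C lam a m k  =  E_m^k  from the paper (indices m >= 1, k >= 0).
   The sequence a is indexed so that a k is a_k for k >= 1 (a 0 unused).
   The value at m = 0 is a dummy (set to 0) and never used for m >= 1. *)
Fixpoint E (C lam : R) (a : nat -> R) (m k : nat) {struct k} : R :=
  match k with
  | O => 0
  | S k' =>
    match m with
    | O => 0
    | S O => lam * (E C lam a 1 k' + 2 * C * E C lam a 1 k' + a (S k'))
    | S m' => lam * (E C lam a m k' + C * (E C lam a m k' + E C lam a m' k'))
    end
  end.

Fixpoint sumE (C lam : R) (a : nat -> R) (n k : nat) : R :=
  match n with
  | O => 0
  | S n' => sumE C lam a n' k + E C lam a n k
  end.

(* Main.v *)
Require Import Defs.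
From Stdlib Require Import Reals Lra Lia Psatz.
Open Scope R_scope.

Section S.
Variables (C lam M : R) (a : nat -> R).
Hypotheses (hC : 0 < C) (hlam0 : 0 < lam) (ha0 : forall i, (1 <= i)%nat -> 0 <= a i).

Lemma E_nonneg : forall k m, 0 <= E C lam a m k.
Proof.
  induction k as [|k IH]; intros m; simpl; [lra|].
  destruct m as [|[|m]]; [lra| |].
  - assert (0 <= a (S k)) by (apply ha0; lia).
    specialize (IH 1%nat). apply Rmult_le_pos; [lra|]. nra.
  - pose proof (IH (S (S m))). pose proof (IH (S m)).
    apply Rmult_le_pos; [lra|]. nra.
Qed.

Lemma E_zero : forall k m, (k < m)%nat -> E C lam a m k = 0.
Proof.
  induction k as [|k IH]; intros m H; simpl; [reflexivity|].
  destruct m as [|[|m]]; [lia|lia|].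
  rewrite (IH (S (S m))) by lia. rewrite (IH (S m)) by lia. ring.
Qed.

Lemma sumE_rec : forall k n, sumE C lam a (S n) (S k) =
  lam * ((1 + 2*C) * E C lam a 1 k + a (S k) + (1 + C) * (sumE C lam a (S n) k - E C lam a 1 k)
        + C * sumE C lam a n k).
Proof.
  intros k n. induction n as [|n IH].
  - simpl. ring.
  - change (sumE C lam a (S (S n)) (S k)) with (sumE C lam a (S n) (S k) + E C lam a (S (S n)) (S k)).
    rewrite IH.
    change (E C lam a (S (S n)) (S k)) with
      (lam * (E C lam a (S (S n)) k + C * (E C lam a (S (S n)) k + E C lam a (S n) k))).
    change (sumE C lam a (S (S n)) k) with (sumE C lam a (S n) k + E C lam a (S (S n)) k).
    change (sumE C lam a (S n) k) with (sumE C lam a n k + E C lam a (S n) k).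
    ring.
Qed.

Lemma E1_le : forall k n, E C lam a 1 k <= sumE C lam a (S n) k.
Proof.
  intros k n. induction n as [|n IH]; simpl; [lra|].
  simpl in IH. pose proof (E_nonneg k (S (S n))). lra.
Qed.

Lemma sumE_nonneg : forall n k, 0 <= sumE C lam a n k.
Proof.
  induction n; intros k; simpl; [lra|]. pose proof (E_nonneg k (S n)). pose proof (IHn k). lra.
Qed.
End S.

Theorem mainTheorem6 (C lam M : R) (a : nat -> R)
  (hC : 0 < C) (hlam0 : 0 < lam) (hlam1 : lam < 1)
  (ha0 : forall i, (1 <= i)%nat -> 0 <= a i)
  (hcond : lam + 3 * lam * C < 1)
  (hM : 0 < M) (haM : forall i, (1 <= i)%nat -> a i <= C * M) :
  forall k : nat, (1 <= k)%nat ->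
    sumE C lam a k k <= M * ((1 - lam - 2 * lam * C) / (1 - lam - 3 * lam * C)).
Proof.
  set (d := 1 - lam - 3 * lam * C).
  assert (hd : 0 < d) by (unfold d; lra).
  set (B := lam * C * M / d).
  assert (HB : B * d = lam * C * M) by (unfold B; field; lra).
  assert (HB0 : 0 <= B).
  { unfold B, Rdiv. apply Rmult_le_pos. { assert (0 < lam*C) by nra. nra. }
    left; apply Rinv_0_lt_compat; lra. }
  assert (Hall : forall k, sumE C lam a k k <= B).
  { induction k as [|k IH]; [simpl; lra|].
    rewrite sumE_rec.
    assert (Hs : sumE C lam a (S k) k = sumE C lam a k k).
    { simpl. rewrite E_zero by lia. ring. }
    rewrite Hs.
    assert (He : E C lam a 1 k <= sumE C lam a k k).
    { destruct k; [simpl; lra|]. apply E1_le; auto. }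
    pose proof (haM (S k) ltac:(lia)).
    pose proof (sumE_nonneg C lam a hC hlam0 ha0 k k).
    assert (lam * ((1 + 3*C) * sumE C lam a k k + C * M) <= lam * ((1 + 3*C) * B + C * M)).
    { apply Rmult_le_compat_l; [lra|]. nra. }
    assert (lam * ((1 + 3*C) * B + C * M) = B) by (unfold d in HB; nra).
    assert (lam * ((1 + 2 * C) * E C lam a 1 k + a (S k) +
      (1 + C) * (sumE C lam a k k - E C lam a 1 k) + C * sumE C lam a k k)
      <= lam * ((1 + 3*C) * sumE C lam a k k + C * M)).
    { apply Rmult_le_compat_l; [lra|]. nra. }
    lra. }
  intros k _. eapply Rle_trans; [apply Hall|].
  unfold B. unfold Rdiv. rewrite <- Rmult_assoc.
  apply Rmult_le_compat_r; [left; apply Rinv_0_lt_compat; lra|]. nra.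
Qed.
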